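(* Let $n\ge1$, fix $\beta\in\partial\mathbb{D}$, and on $\mathbb{D}^{n-1}$ (coordinates $\alpha_0,\dots,\alpha_{n-2}$) use the Poisson bracket described in the context. Let $P_n,Q_n$ be as in the context, $F_n(z)=-Q_n(z)/P_n(z)$ and $f_n(w)=w^{-1}\frac{F_n(w)-1}{F_n(w)+1}$. Then \[ \{P_n(z),F_n(w)\}=-\frac{i}{2}\Bigl[\bigl(P_n(z)F_n(w)+Q_n(z)\bigr)\frac{z+w}{z-w}-P_n(z)-Q_n(z)F_n(w)\Bigr], \] \[ \{Q_n(z),F_n(w)\}=-F_n(w)\,\{P_n(z),F_n(w)\}, \] \[ \{P_n(z),f_n(w)\}=(1-wf_n(w))W_n(z,w),\qquad \{Q_n(z),f_n(w)\}=-(1+wf_n(w))W_n(z,w), \] where \[ W_n(z,w)=-\frac{i}{2}\,\frac{\bigl(P_n(z)+Q_n(z)\bigr)+z\bigl(P_n(z)-Q_n(z)\bigr)f_n(w)}{z-w}. \]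
   Context: Let $\rho_j=(1-|\alpha_j|^2)^{1/2}$; the Poisson bracket is $\{f,g\}=\sum_{j=0}^{n-2}i\rho_j^2\bigl(\frac{\partial f}{\partial\bar\alpha_j}\frac{\partial g}{\partial\alpha_j}-\frac{\partial f}{\partial\alpha_j}\frac{\partial g}{\partial\bar\alpha_j}\bigr)$ (Wirtinger derivatives), i.e. $\{\alpha_j,\alpha_k\}=0$, $\{\alpha_j,\bar\alpha_k\}=-i\rho_j^2\delta_{jk}$; $z,w$ are held fixed. The monic OPUC satisfy $\Phi_0=1$, $\Phi_{k+1}(z)=z\Phi_k(z)-\bar\alpha_k\Phi_k^*(z)$ with $\Phi_k^*(z)=z^k\overline{\Phi_k(1/\bar z)}$; $\Psi_k$ satisfies the same recursion with $\alpha_j$ replaced by $-\alpha_j$; $P_n(z)=z\Phi_{n-1}(z)-\bar\beta\Phi_{n-1}^*(z)$, $Q_n(z)=z\Psi_{n-1}(z)+\bar\beta\Psi_{n-1}^*(z)$. The identities hold wherever the denominators are nonzero. *)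

(* Defs.v *)
From Stdlib Require Import Reals List.
From Coquelicot Require Import Coquelicot.
Import ListNotations.
Open Scope C_scope.

(* Polynomials in z: lists of coefficients, index j = coefficient of z^j. *)
Definition peval (p : list C) (z : C) : C :=
  fold_right (fun c acc => c + z * acc) (RtoC 0) p.

Fixpoint padd (p q : list C) : list C :=
  match p, q with
  | [], _ => q
  | _, [] => p
  | c :: p1, d :: q1 => Cplus c d :: padd p1 q1
  end.

Definition pmulX (p : list C) : list C := RtoC 0 :: p.
Definition pscale (c : C) (p : list C) : list C := map (Cmult c) p.

(* Reversed polynomial of degree <= k:  p^*(z) = z^k * conj(p(1/conj z)),
   i.e. the coefficient of z^j is conj (coefficient of z^(k-j)). *)
Definition pstar (k : nat) (p : list C) : list C :=
  map (fun j => Cconj (nth (k - j) p (RtoC 0))) (seq 0 (S k)).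

Fixpoint Phi (a : nat -> C) (k : nat) : list C :=
  match k with
  | O => [RtoC 1]
  | S k' => padd (pmulX (Phi a k')) (pscale (- Cconj (a k')) (pstar k' (Phi a k')))
  end.

Definition Psi (a : nat -> C) (k : nat) : list C := Phi (fun j => - a j) k.

Definition Pn_op (n : nat) (beta : C) (a : nat -> C) (z : C) : C :=
  z * peval (Phi a (n - 1)) z - Cconj beta * peval (pstar (n - 1) (Phi a (n - 1))) z.

Definition Qn_op (n : nat) (beta : C) (a : nat -> C) (z : C) : C :=
  z * peval (Psi a (n - 1)) z + Cconj beta * peval (pstar (n - 1) (Psi a (n - 1))) z.

Definition Fn_op (n : nat) (beta : C) (a : nat -> C) (w : C) : C :=
  - Qn_op n beta a w / Pn_op n beta a w.

Definition fn_op (n : nat) (beta : C) (a : nat -> C) (w : C) : C :=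
  / w * ((Fn_op n beta a w - 1) / (Fn_op n beta a w + 1)).

Definition upd (a : nat -> C) (j : nat) (v : C) : nat -> C :=
  fun k => if Nat.eqb k j then v else a k.

Definition dX (f : (nat -> C) -> C) (j : nat) (a : nat -> C) : C :=
  RtoC (Derive (fun t => Re (f (upd a j (a j + RtoC t)))) 0)
  + Ci * RtoC (Derive (fun t => Im (f (upd a j (a j + RtoC t)))) 0).

Definition dY (f : (nat -> C) -> C) (j : nat) (a : nat -> C) : C :=
  RtoC (Derive (fun t => Re (f (upd a j (a j + RtoC t * Ci)))) 0)
  + Ci * RtoC (Derive (fun t => Im (f (upd a j (a j + RtoC t * Ci)))) 0).

Definition dA (f : (nat -> C) -> C) (j : nat) (a : nat -> C) : C :=
  (dX f j a - Ci * dY f j a) / 2.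
Definition dAbar (f : (nat -> C) -> C) (j : nat) (a : nat -> C) : C :=
  (dX f j a + Ci * dY f j a) / 2.

Definition PB (m : nat) (f g : (nat -> C) -> C) (a : nat -> C) : C :=
  fold_right Cplus (RtoC 0)
    (map (fun j => Ci * RtoC (1 - (Cmod (a j))^2)
                   * (dAbar f j a * dA g j a - dA f j a * dAbar g j a))
         (seq 0 m)).

(* Main.v *)
Require Import Defs.
From Stdlib Require Import Reals List Lia Lra FunctionalExtensionality.
From Coquelicot Require Import Coquelicot.
Import ListNotations.
Open Scope C_scope.


Lemma peval_padd p q z : peval (padd p q) z = peval p z + peval q z.
Proof.
  revert q; induction p as [|c p IH]; intros [|d q]; simpl; try field.
  rewrite IH; field.
Qed.

Lemma peval_pmulX p z : peval (pmulX p) z = z * peval p z.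
Proof. unfold pmulX; simpl; field. Qed.

Lemma peval_pscale c p z : peval (pscale c p) z = c * peval p z.
Proof.
  unfold pscale; induction p as [|d p IH]; simpl. field. rewrite IH; field.
Qed.

Lemma nth_padd p q i : nth i (padd p q) (RtoC 0) = nth i p (RtoC 0) + nth i q (RtoC 0).
Proof.
  revert q i; induction p as [|c p IH]; intros [|d q] [|i]; simpl; try field.
  apply IH.
Qed.

Lemma nth_pscale c p i : nth i (pscale c p) (RtoC 0) = c * nth i p (RtoC 0).
Proof.
  unfold pscale; revert i; induction p as [|d p IH]; intros [|i]; simpl; try field.
  apply IH.
Qed.

Lemma length_padd p q : length (padd p q) = Nat.max (length p) (length q).
Proof.
  revert q; induction p as [|c p IH]; intros [|d q]; simpl; auto.
Qed.

Lemma length_pstar k p : length (pstar k p) = S k.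
Proof. unfold pstar. rewrite length_map, length_seq. reflexivity. Qed.

Lemma nth_pstar k p i : nth i (pstar k p) (RtoC 0) =
  if Nat.leb i k then Cconj (nth (k - i) p (RtoC 0)) else RtoC 0.
Proof.
  destruct (Nat.leb_spec i k).
  - unfold pstar.
    rewrite nth_indep with (d' := (fun j => Cconj (nth (k - j) p (RtoC 0))) 0%nat).
    2:{ rewrite length_map, length_seq. lia. }
    rewrite (map_nth (fun j => Cconj (nth (k - j) p (RtoC 0))) (seq 0 (S k)) 0%nat i).
    rewrite seq_nth by lia. reflexivity.
  - apply nth_overflow. rewrite length_pstar. lia.
Qed.

Lemma length_Phi a k : length (Phi a k) = S k.
Proof.
  induction k. reflexivity.
  cbn [Phi]. rewrite length_padd. unfold pmulX, pscale.
  rewrite length_map, length_pstar. cbn [length]. rewrite IHk. lia.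
Qed.

Lemma peval_nth_zero p z : (forall i, nth i p (RtoC 0) = RtoC 0) -> peval p z = RtoC 0.
Proof.
  induction p as [|c p IH]; intros H; simpl. reflexivity.
  rewrite IH. pose proof (H 0%nat) as H0; simpl in H0; rewrite H0; field.
  intros i; apply (H (S i)).
Qed.

Lemma peval_nth_ext p q z : (forall i, nth i p (RtoC 0) = nth i q (RtoC 0)) -> peval p z = peval q z.
Proof.
  revert q; induction p as [|c p IH]; intros q H.
  - simpl. symmetry. apply peval_nth_zero. intros i; rewrite <- H. destruct i; reflexivity.
  - destruct q as [|d q].
    + apply peval_nth_zero. intros i. rewrite H. destruct i; reflexivity.
    + simpl. pose proof (H 0%nat) as H0; simpl in H0; rewrite H0.
      rewrite (IH q). reflexivity. intros i; apply (H (S i)).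
Qed.

Lemma Cconj0 : Cconj (RtoC 0) = RtoC 0.
Proof. unfold Cconj, RtoC; simpl; f_equal; ring. Qed.

Lemma pstar_step k p c z : length p = S k ->
  peval (pstar (S k) (padd (pmulX p) (pscale c (pstar k p)))) z
  = peval (pstar k p) z + Cconj c * (z * peval p z).
Proof.
  intros Hl.
  rewrite <- peval_pmulX, <- peval_pscale, <- peval_padd.
  apply peval_nth_ext. intros i.
  rewrite nth_padd, nth_pscale, !nth_pstar, nth_padd, nth_pscale, nth_pstar.
  unfold pmulX.
  destruct i as [|i].
  - simpl (Nat.leb 0 (S k)). simpl (Nat.leb 0 k). rewrite Nat.sub_0_r.
    replace (Nat.leb (S k) k) with false by (symmetry; apply Nat.leb_gt; lia).
    simpl. rewrite Cplus_conj, Cmult_conj, Cconj0, Nat.sub_0_r. field.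
  - destruct (Nat.leb_spec (S i) (S k)).
    + destruct (Nat.leb_spec (S i) k).
      * replace (S k - S i)%nat with (S (k - S i)) by lia.
        simpl nth at 1.
        replace (Nat.leb (S (k - S i)) k) with true by (symmetry; apply Nat.leb_le; lia).
        replace (k - S (k - S i))%nat with i by lia.
        rewrite Cplus_conj, Cmult_conj, Cconj_conj. simpl. reflexivity.
      * assert (i = k) by lia. subst i. rewrite Nat.sub_diag. simpl nth.
        replace (Nat.leb 0 k) with true by reflexivity. rewrite Nat.sub_0_r.
        rewrite Cplus_conj, Cmult_conj, Cconj_conj. simpl.
        rewrite Cconj0. field.
    + replace (Nat.leb (S i) k) with false by (symmetry; apply Nat.leb_gt; lia).
      simpl. rewrite nth_overflow by lia. field.
Qed.


Definition Tm (al z : C) (v : C*C) : C*C :=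
  (z * fst v - Cconj al * snd v, snd v - al * z * fst v).

Fixpoint traj (a : nat -> C) (z : C) (p : C*C) (k : nat) : C*C :=
  match k with O => p | S k' => Tm (a k') z (traj a z p k') end.

Lemma Cconj_R r : Cconj (RtoC r) = RtoC r.
Proof. unfold Cconj, RtoC; simpl; f_equal; ring. Qed.

Lemma Phi_traj a z k :
  peval (Phi a k) z = fst (traj a z (RtoC 1, RtoC 1) k)
  /\ peval (pstar k (Phi a k)) z = snd (traj a z (RtoC 1, RtoC 1) k).
Proof.
  induction k as [|k [IH1 IH2]].
  - simpl. rewrite Cconj_R. split; field.
  - cbn [Phi traj]. unfold Tm. cbn [fst snd]. split.
    + rewrite peval_padd, peval_pmulX, peval_pscale, IH1, IH2. field.
    + rewrite pstar_step by apply length_Phi. rewrite IH1, IH2, Copp_conj, Cconj_conj. field.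
Qed.

Lemma traj_neg a z k :
  fst (traj (fun j => - a j) z (RtoC 1, RtoC 1) k) = fst (traj a z (RtoC 1, - RtoC 1) k)
  /\ snd (traj (fun j => - a j) z (RtoC 1, RtoC 1) k) = - snd (traj a z (RtoC 1, - RtoC 1) k).
Proof.
  induction k as [|k [IH1 IH2]].
  - simpl. split; field.
  - cbn [traj]. unfold Tm. cbn [fst snd]. rewrite IH1, IH2, Copp_conj. split; field.
Qed.

Definition dot (l x : C*C) : C := fst l * fst x + snd l * snd x.

Lemma Pn_repr n beta b z :
  Pn_op n beta b z = dot (z, - Cconj beta) (traj b z (RtoC 1, RtoC 1) (n - 1)).
Proof.
  unfold Pn_op, dot. destruct (Phi_traj b z (n-1)) as [H1 H2]. rewrite H1, H2. cbn [fst snd]. field.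
Qed.

Lemma Qn_repr n beta b z :
  Qn_op n beta b z = dot (z, - Cconj beta) (traj b z (RtoC 1, - RtoC 1) (n - 1)).
Proof.
  unfold Qn_op, Psi, dot. destruct (Phi_traj (fun j => - b j) z (n-1)) as [H1 H2]. rewrite H1, H2.
  destruct (traj_neg b z (n-1)) as [H3 H4]. rewrite H3, H4. cbn [fst snd]. field.
Qed.

Lemma traj_lin a z s t p q k :
  traj a z (s * fst p + t * fst q, s * snd p + t * snd q) k
  = (s * fst (traj a z p k) + t * fst (traj a z q k), s * snd (traj a z p k) + t * snd (traj a z q k)).
Proof.
  induction k as [|k IH]. reflexivity.
  cbn [traj]. rewrite IH. unfold Tm. cbn [fst snd]. f_equal; ring.
Qed.

Fixpoint cf1 (a : nat -> C) (z : C) (p : C*C) (k j : nat) : C*C :=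
  match k with
  | O => (RtoC 0, RtoC 0)
  | S k' => if Nat.ltb j k' then Tm (a k') z (cf1 a z p k' j)
            else if Nat.eqb j k' then (RtoC 0, - (z * fst (traj a z p k')))
            else (RtoC 0, RtoC 0)
  end.

Fixpoint cf2 (a : nat -> C) (z : C) (p : C*C) (k j : nat) : C*C :=
  match k with
  | O => (RtoC 0, RtoC 0)
  | S k' => if Nat.ltb j k' then Tm (a k') z (cf2 a z p k' j)
            else if Nat.eqb j k' then (- snd (traj a z p k'), RtoC 0)
            else (RtoC 0, RtoC 0)
  end.

Lemma traj_upd_low a j v z p k : (k <= j)%nat -> traj (upd a j v) z p k = traj a z p k.
Proof.
  induction k as [|k IH]; intros H. reflexivity.
  cbn [traj]. rewrite IH by lia. unfold upd.
  replace (Nat.eqb k j) with false by (symmetry; apply Nat.eqb_neq; lia). reflexivity.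
Qed.

Lemma traj_upd a j v z p k :
  fst (traj (upd a j v) z p k) = fst (traj a z p k) + (v - a j) * fst (cf1 a z p k j) + Cconj (v - a j) * fst (cf2 a z p k j)
  /\ snd (traj (upd a j v) z p k) = snd (traj a z p k) + (v - a j) * snd (cf1 a z p k j) + Cconj (v - a j) * snd (cf2 a z p k j).
Proof.
  induction k as [|k [IH1 IH2]].
  - simpl. split; field.
  - cbn [traj cf1 cf2]. destruct (Nat.ltb_spec j k).
    + assert (Hu : upd a j v k = a k).
      { unfold upd. replace (Nat.eqb k j) with false by (symmetry; apply Nat.eqb_neq; lia). reflexivity. }
      rewrite Hu. unfold Tm. cbn [fst snd]. rewrite IH1, IH2. split; ring.
    + rewrite traj_upd_low by lia. destruct (Nat.eqb_spec j k).
      * subst j. unfold Tm, upd. rewrite Nat.eqb_refl. cbn [fst snd].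
        rewrite Cminus_conj. split; ring.
      * unfold Tm, upd. replace (Nat.eqb k j) with false by (symmetry; apply Nat.eqb_neq; lia).
        cbn [fst snd]. split; ring.
Qed.


Definition sumC (m : nat) (f : nat -> C) : C := fold_right Cplus (RtoC 0) (map f (seq 0 m)).

Lemma fold_Cplus_init l c : fold_right Cplus c l = fold_right Cplus (RtoC 0) l + c.
Proof. induction l as [|x l IH]; simpl. field. rewrite IH. ring. Qed.

Lemma sumC_S m f : sumC (S m) f = sumC m f + f m.
Proof.
  unfold sumC. rewrite seq_S, map_app, fold_right_app. simpl.
  rewrite fold_Cplus_init. f_equal. field.
Qed.

Lemma sumC_ext m f g : (forall j, (j < m)%nat -> f j = g j) -> sumC m f = sumC m g.
Proof.
  induction m as [|m IH]; intros H. reflexivity.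
  rewrite !sumC_S. rewrite IH. rewrite H. reflexivity. lia. intros; apply H; lia.
Qed.

Lemma sumC_lin m f g u v : sumC m (fun j => u * f j + v * g j) = u * sumC m f + v * sumC m g.
Proof.
  induction m as [|m IH]. unfold sumC; simpl; field.
  rewrite !sumC_S, IH. ring.
Qed.

Lemma rho2_eq x : RtoC (1 - Cmod x ^ 2) = 1 - x * Cconj x.
Proof.
  rewrite <- Cmod2_conj. unfold RtoC, Cminus, Cplus, Copp, Cmult; simpl. f_equal; ring.
Qed.

Definition TmT (al z : C) (l : C*C) : C*C :=
  (z * fst l - al * z * snd l, - Cconj al * fst l + snd l).

Lemma dot_Tm al z l v : dot l (Tm al z v) = dot (TmT al z l) v.
Proof. unfold dot, Tm, TmT; cbn [fst snd]. ring. Qed.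

Definition bterm a z w p q l mu m j :=
  Ci * RtoC (1 - Cmod (a j) ^ 2) *
  (dot l (cf2 a z p m j) * dot mu (cf1 a w q m j) - dot l (cf1 a z p m j) * dot mu (cf2 a w q m j)).

Definition dd (x y : C*C) := fst x * snd y - snd x * fst y.
Definition e1 : C*C := (RtoC 1, RtoC 0).
Definition e2 : C*C := (RtoC 0, RtoC 1).

Lemma cf1_S_lt a z p m j : (j < m)%nat -> cf1 a z p (S m) j = Tm (a m) z (cf1 a z p m j).
Proof. intros H. cbn [cf1]. replace (Nat.ltb j m) with true by (symmetry; apply Nat.ltb_lt; lia). reflexivity. Qed.
Lemma cf2_S_lt a z p m j : (j < m)%nat -> cf2 a z p (S m) j = Tm (a m) z (cf2 a z p m j).
Proof. intros H. cbn [cf2]. replace (Nat.ltb j m) with true by (symmetry; apply Nat.ltb_lt; lia). reflexivity. Qed.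
Lemma cf1_S_eq a z p m : cf1 a z p (S m) m = (RtoC 0, - (z * fst (traj a z p m))).
Proof. cbn [cf1]. rewrite Nat.ltb_irrefl, Nat.eqb_refl. reflexivity. Qed.
Lemma cf2_S_eq a z p m : cf2 a z p (S m) m = (- snd (traj a z p m), RtoC 0).
Proof. cbn [cf2]. rewrite Nat.ltb_irrefl, Nat.eqb_refl. reflexivity. Qed.

Theorem Brk a z w p q : z <> w -> forall m l mu,
  sumC m (bterm a z w p q l mu m) =
  Ci / (z - w) * (dd (traj a z p m) (traj a w q m) * (w * fst l * snd mu - z * snd l * fst mu)
     - dd p q * (w * dot l (traj a z e1 m) * dot mu (traj a w e2 m)
                 - z * dot l (traj a z e2 m) * dot mu (traj a w e1 m))).
Proof.
  intros Hzw. assert (Hzw' : z - w <> RtoC 0).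
  { intros H; apply Hzw. rewrite <- (Cplus_0_l w), <- H. ring. }
  induction m as [|m IH]; intros l mu.
  - unfold sumC, e1, e2, dd, dot. cbn. field. exact Hzw'.
  - rewrite sumC_S.
    rewrite (sumC_ext m _ (bterm a z w p q (TmT (a m) z l) (TmT (a m) w mu) m)).
    2:{ intros j Hj. unfold bterm. rewrite cf1_S_lt, cf2_S_lt, cf1_S_lt, cf2_S_lt by exact Hj.
        rewrite !dot_Tm. reflexivity. }
    rewrite IH. unfold bterm. rewrite cf1_S_eq, cf2_S_eq, cf1_S_eq, cf2_S_eq.
    cbn [traj]. rewrite !dot_Tm. rewrite rho2_eq.
    destruct (traj a z p m) as [x1 x2]. destruct (traj a w q m) as [y1 y2].
    destruct (traj a z e1 m) as [u1 u2]. destruct (traj a z e2 m) as [v1 v2].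
    destruct (traj a w e1 m) as [s1 s2]. destruct (traj a w e2 m) as [t1 t2].
    destruct l as [l1 l2]. destruct mu as [m1 m2].
    unfold dd, dot, Tm, TmT. cbn [fst snd]. field. exact Hzw'.
Qed.

Lemma dot_e1 l a x m :
  dot l (traj a x e1 m) = (dot l (traj a x (RtoC 1, RtoC 1) m) + dot l (traj a x (RtoC 1, - RtoC 1) m)) / RtoC 2.
Proof.
  assert (He : e1 = (/ RtoC 2 * fst (RtoC 1, RtoC 1) + / RtoC 2 * fst (RtoC 1, - RtoC 1),
                     / RtoC 2 * snd (RtoC 1, RtoC 1) + / RtoC 2 * snd (RtoC 1, - RtoC 1))).
  { unfold e1; cbn [fst snd]. assert (H2 : RtoC 2 <> RtoC 0) by (intros H; injection H; lra).
    f_equal; field; try exact H2. }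
  rewrite He, traj_lin. unfold dot; cbn [fst snd].
  assert (H2 : RtoC 2 <> RtoC 0) by (intros H; injection H; lra). field; try exact H2.
Qed.

Lemma dot_e2 l a x m :
  dot l (traj a x e2 m) = (dot l (traj a x (RtoC 1, RtoC 1) m) - dot l (traj a x (RtoC 1, - RtoC 1) m)) / RtoC 2.
Proof.
  assert (He : e2 = (/ RtoC 2 * fst (RtoC 1, RtoC 1) + (- / RtoC 2) * fst (RtoC 1, - RtoC 1),
                     / RtoC 2 * snd (RtoC 1, RtoC 1) + (- / RtoC 2) * snd (RtoC 1, - RtoC 1))).
  { unfold e2; cbn [fst snd]. assert (H2 : RtoC 2 <> RtoC 0) by (intros H; injection H; lra).
    f_equal; field; try exact H2. }
  rewrite He, traj_lin. unfold dot; cbn [fst snd].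
  assert (H2 : RtoC 2 <> RtoC 0) by (intros H; injection H; lra). field; try exact H2.
Qed.

Lemma dot_affine a j v x p l m :
  dot l (traj (upd a j v) x p m) = dot l (traj a x p m) + (v - a j) * dot l (cf1 a x p m j)
                                   + Cconj (v - a j) * dot l (cf2 a x p m j).
Proof.
  destruct (traj_upd a j v x p m) as [H1 H2]. unfold dot. rewrite H1, H2. ring.
Qed.


Definition hasD (g : R -> C) (d : C) :=
  is_derive (fun t => Re (g t)) 0%R (Re d) /\ is_derive (fun t => Im (g t)) 0%R (Im d).

Lemma isd_eq (f : R -> R) x l l' : is_derive f x l -> l = l' -> is_derive f x l'.
Proof. intros H <-; exact H. Qed.

Lemma isd_mult (f g : R -> R) x df dg : is_derive f x df -> is_derive g x dg ->
  is_derive (fun t => (f t * g t)%R) x (df * g x + f x * dg)%R.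
Proof. intros H1 H2. apply (is_derive_mult f g x df dg H1 H2). intros; apply Rmult_comm. Qed.

Lemma isd_plus (f g : R -> R) x df dg : is_derive f x df -> is_derive g x dg ->
  is_derive (fun t => (f t + g t)%R) x (df + dg)%R.
Proof. intros H1 H2. apply (is_derive_plus f g x df dg H1 H2). Qed.

Lemma isd_minus (f g : R -> R) x df dg : is_derive f x df -> is_derive g x dg ->
  is_derive (fun t => (f t - g t)%R) x (df - dg)%R.
Proof. intros H1 H2. apply (is_derive_minus f g x df dg H1 H2). Qed.

Lemma isd_const (c x : R) : is_derive (fun _ => c) x 0%R.
Proof. apply (is_derive_const c x). Qed.

Lemma isd_id (x : R) : is_derive (fun t => t) x 1%R.
Proof. apply (is_derive_id x). Qed.

Lemma hasD_ext g h d : (forall t, g t = h t) -> hasD g d -> hasD h d.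
Proof.
  intros E [H1 H2]; split; eapply is_derive_ext; try eassumption; intros t; simpl; rewrite E; reflexivity.
Qed.

Lemma hasD_eq g d d' : hasD g d -> d = d' -> hasD g d'.
Proof. intros H <-; exact H. Qed.

Lemma hasD_const c : hasD (fun _ => c) (RtoC 0).
Proof. split; apply isd_const. Qed.

Lemma hasD_id : hasD (fun t => RtoC t) (RtoC 1).
Proof.
  split. apply isd_id.
  eapply is_derive_ext; [|apply (isd_const 0%R)]. intros t; reflexivity.
Qed.

Lemma hasD_add g h dg dh : hasD g dg -> hasD h dh -> hasD (fun t => g t + h t) (dg + dh).
Proof.
  intros [G1 G2] [H1 H2]; split.
  - apply (isd_plus _ _ _ _ _ G1 H1).
  - apply (isd_plus _ _ _ _ _ G2 H2).
Qed.

Lemma hasD_opp g dg : hasD g dg -> hasD (fun t => - g t) (- dg).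
Proof.
  intros [G1 G2]; split.
  - apply (is_derive_opp _ _ _ G1).
  - apply (is_derive_opp _ _ _ G2).
Qed.

Lemma hasD_mul g h dg dh : hasD g dg -> hasD h dh ->
  hasD (fun t => g t * h t) (dg * h 0%R + g 0%R * dh).
Proof.
  intros [G1 G2] [H1 H2]; split.
  - eapply isd_eq. apply (isd_minus _ _ _ _ _ (isd_mult _ _ _ _ _ G1 H1) (isd_mult _ _ _ _ _ G2 H2)).
    simpl. unfold Re, Im. ring.
  - eapply isd_eq. apply (isd_plus _ _ _ _ _ (isd_mult _ _ _ _ _ G1 H2) (isd_mult _ _ _ _ _ G2 H1)).
    simpl. unfold Re, Im. ring.
Qed.

Lemma Cnz_norm (c : C) : c <> RtoC 0 -> (fst c * fst c + snd c * snd c <> 0)%R.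
Proof.
  intros Hc H. apply Hc. destruct c as [x y]. simpl in H.
  assert (x = 0%R) by nra. assert (y = 0%R) by nra. subst. reflexivity.
Qed.

Lemma hasD_inv g dg : hasD g dg -> g 0%R <> RtoC 0 ->
  hasD (fun t => / g t) (- dg / (g 0%R * g 0%R)).
Proof.
  intros [G1 G2] Hz. pose proof (Cnz_norm _ Hz) as Hn.
  assert (HD : is_derive (fun t => fst (g t) * fst (g t) + snd (g t) * snd (g t))%R 0%R
      (Re dg * fst (g 0%R) + fst (g 0%R) * Re dg + (Im dg * snd (g 0%R) + snd (g 0%R) * Im dg))%R).
  { apply isd_plus; apply isd_mult; assumption. }
  split.
  - eapply isd_eq. eapply is_derive_ext.
    2: apply (is_derive_div _ _ _ _ _ G1 HD Hn).
    intros t. simpl. unfold Rdiv. f_equal. f_equal. ring.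
    destruct (g 0%R) as [x y]. destruct dg as [p q]. unfold Re, Im in *. simpl in *.
    field; repeat split; intros H; apply Hn; nra.
  - eapply isd_eq. eapply is_derive_ext.
    2: apply (is_derive_div _ _ _ _ _ (is_derive_opp _ _ _ G2) HD Hn).
    intros t. simpl. unfold Rdiv. f_equal. f_equal. ring.
    destruct (g 0%R) as [x y]. destruct dg as [p q]. unfold Re, Im, opp in *. simpl in *.
    field; repeat split; intros H; apply Hn; nra.
Qed.

Definition hasW (X : (nat -> C) -> C) j a d1 d2 :=
  hasD (fun t => X (upd a j (a j + RtoC t))) (d1 + d2)
  /\ hasD (fun t => X (upd a j (a j + RtoC t * Ci))) (Ci * d1 - Ci * d2).

Lemma upd0 a j : upd a j (a j + RtoC 0) = a.
Proof.
  apply functional_extensionality. intros k. unfold upd.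
  destruct (Nat.eqb_spec k j). subst; field. reflexivity.
Qed.

Lemma upd0' a j : upd a j (a j + RtoC 0 * Ci) = a.
Proof.
  apply functional_extensionality. intros k. unfold upd.
  destruct (Nat.eqb_spec k j). subst; field. reflexivity.
Qed.

Lemma hasW_ext X Y j a d1 d2 : (forall b, X b = Y b) -> hasW X j a d1 d2 -> hasW Y j a d1 d2.
Proof. intros E [H1 H2]; split; eapply hasD_ext; try eassumption; intros t; apply E. Qed.

Lemma hasW_eq X j a d1 d2 d1' d2' : hasW X j a d1 d2 -> d1 = d1' -> d2 = d2' -> hasW X j a d1' d2'.
Proof. intros H <- <-; exact H. Qed.

Lemma hasW_const c j a : hasW (fun _ => c) j a (RtoC 0) (RtoC 0).
Proof.
  split; eapply hasD_eq; try apply hasD_const; field.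
Qed.

Lemma hasW_add X Y j a x1 x2 y1 y2 : hasW X j a x1 x2 -> hasW Y j a y1 y2 ->
  hasW (fun b => X b + Y b) j a (x1 + y1) (x2 + y2).
Proof.
  intros [X1 X2] [Y1 Y2]; split; eapply hasD_eq.
  apply (hasD_add _ _ _ _ X1 Y1). ring.
  apply (hasD_add _ _ _ _ X2 Y2). ring.
Qed.

Lemma hasW_opp X j a x1 x2 : hasW X j a x1 x2 -> hasW (fun b => - X b) j a (- x1) (- x2).
Proof.
  intros [X1 X2]; split; eapply hasD_eq.
  apply (hasD_opp _ _ X1). ring.
  apply (hasD_opp _ _ X2). ring.
Qed.

Lemma hasW_mul X Y j a x1 x2 y1 y2 : hasW X j a x1 x2 -> hasW Y j a y1 y2 ->
  hasW (fun b => X b * Y b) j a (x1 * Y a + X a * y1) (x2 * Y a + X a * y2).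
Proof.
  intros [X1 X2] [Y1 Y2]; split; eapply hasD_eq.
  apply (hasD_mul _ _ _ _ X1 Y1). rewrite upd0. ring.
  apply (hasD_mul _ _ _ _ X2 Y2). rewrite upd0'. ring.
Qed.

Lemma hasW_inv X j a x1 x2 : hasW X j a x1 x2 -> X a <> RtoC 0 ->
  hasW (fun b => / X b) j a (- x1 / (X a * X a)) (- x2 / (X a * X a)).
Proof.
  intros [X1 X2] Hz; split; eapply hasD_eq.
  apply (hasD_inv _ _ X1). rewrite upd0. exact Hz. rewrite upd0. field. exact Hz.
  apply (hasD_inv _ _ X2). rewrite upd0'. exact Hz. rewrite upd0'. field. exact Hz.
Qed.

Lemma Cconj_tR (t : R) : Cconj (RtoC t) = RtoC t.
Proof. unfold Cconj, RtoC; simpl; f_equal; ring. Qed.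
Lemma Cconj_tI (t : R) : Cconj (RtoC t * Ci) = - (RtoC t * Ci).
Proof. unfold Cconj, RtoC, Ci, Cmult, Copp; simpl; f_equal; ring. Qed.

Lemma hasW_affine X j a d1 d2 :
  (forall v, X (upd a j v) = X a + (v - a j) * d1 + Cconj (v - a j) * d2) -> hasW X j a d1 d2.
Proof.
  intros E. split.
  - apply hasD_ext with (g := fun t => X a + RtoC t * (d1 + d2)).
    { intros t. rewrite E. replace (a j + RtoC t - a j) with (RtoC t) by ring.
      rewrite Cconj_tR. ring. }
    eapply hasD_eq. apply hasD_add. apply hasD_const. apply hasD_mul. apply hasD_id. apply hasD_const.
    cbv beta. ring.
  - apply hasD_ext with (g := fun t => X a + RtoC t * (Ci * d1 - Ci * d2)).
    { intros t. rewrite E. replace (a j + RtoC t * Ci - a j) with (RtoC t * Ci) by ring.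
      rewrite Cconj_tI. ring. }
    eapply hasD_eq. apply hasD_add. apply hasD_const. apply hasD_mul. apply hasD_id. apply hasD_const.
    cbv beta. ring.
Qed.

Lemma C_eta (c : C) : RtoC (Re c) + Ci * RtoC (Im c) = c.
Proof. destruct c as [x y]. unfold RtoC, Ci, Cmult, Cplus, Re, Im; simpl; f_equal; ring. Qed.

Lemma Wirt X j a d1 d2 : hasW X j a d1 d2 -> dA X j a = d1 /\ dAbar X j a = d2.
Proof.
  intros [[H1 H2] [H3 H4]].
  unfold dA, dAbar, dX, dY.
  assert (E1 : Derive (fun t => Re (X (upd a j (a j + RtoC t)))) 0%R = Re (d1 + d2))
    by (apply is_derive_unique; exact H1).
  assert (E2 : Derive (fun t => Im (X (upd a j (a j + RtoC t)))) 0%R = Im (d1 + d2))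
    by (apply is_derive_unique; exact H2).
  assert (E3 : Derive (fun t => Re (X (upd a j (a j + RtoC t * Ci)))) 0%R = Re (Ci * d1 - Ci * d2))
    by (apply is_derive_unique; exact H3).
  assert (E4 : Derive (fun t => Im (X (upd a j (a j + RtoC t * Ci)))) 0%R = Im (Ci * d1 - Ci * d2))
    by (apply is_derive_unique; exact H4).
  rewrite E1, E2, E3, E4.
  rewrite !C_eta.
  assert (HI : Ci * Ci = - RtoC 1) by (unfold Ci, Cmult, Copp, RtoC; simpl; f_equal; ring).
  assert (H2n : RtoC 2 <> RtoC 0) by (intros H; injection H; lra).
  replace (Ci * (Ci * d1 - Ci * d2)) with ((Ci * Ci) * (d1 - d2)) by ring. rewrite HI.
  split; field; exact H2n.
Qed.


Lemma PB_sum m X Y a (x1 x2 y1 y2 : nat -> C) :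
  (forall j, (j < m)%nat -> hasW X j a (x1 j) (x2 j)) ->
  (forall j, (j < m)%nat -> hasW Y j a (y1 j) (y2 j)) ->
  PB m X Y a = sumC m (fun j => Ci * RtoC (1 - Cmod (a j) ^ 2) * (x2 j * y1 j - x1 j * y2 j)).
Proof.
  intros HX HY. unfold PB. fold (sumC m (fun j => Ci * RtoC (1 - Cmod (a j) ^ 2)
                   * (dAbar X j a * dA Y j a - dA X j a * dAbar Y j a))).
  apply sumC_ext. intros j Hj.
  destruct (Wirt _ _ _ _ _ (HX j Hj)) as [E1 E2].
  destruct (Wirt _ _ _ _ _ (HY j Hj)) as [E3 E4].
  rewrite E1, E2, E3, E4. reflexivity.
Qed.

Definition cc1 a beta m x p j := dot (x, - Cconj beta) (cf1 a x p m j).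
Definition cc2 a beta m x p j := dot (x, - Cconj beta) (cf2 a x p m j).

Lemma hasW_traj a beta m x p j :
  hasW (fun b => dot (x, - Cconj beta) (traj b x p m)) j a (cc1 a beta m x p j) (cc2 a beta m x p j).
Proof. apply hasW_affine. intros v. apply dot_affine. Qed.

Lemma hasW_P n beta a x j :
  hasW (fun b => Pn_op n beta b x) j a (cc1 a beta (n-1) x (RtoC 1, RtoC 1) j) (cc2 a beta (n-1) x (RtoC 1, RtoC 1) j).
Proof. eapply hasW_ext; [|apply hasW_traj]. intros b. symmetry. apply Pn_repr. Qed.

Lemma hasW_Q n beta a x j :
  hasW (fun b => Qn_op n beta b x) j a (cc1 a beta (n-1) x (RtoC 1, - RtoC 1) j) (cc2 a beta (n-1) x (RtoC 1, - RtoC 1) j).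
Proof. eapply hasW_ext; [|apply hasW_traj]. intros b. symmetry. apply Qn_repr. Qed.


Lemma sumC_scal m f u : sumC m (fun j => u * f j) = u * sumC m f.
Proof. induction m as [|m IH]. unfold sumC; simpl; ring. rewrite !sumC_S, IH. ring. Qed.

Theorem theorem13p2 (n : nat) (beta : C) (a : nat -> C) (z w : C) :
  (1 <= n)%nat ->
  Cmod beta = 1%R ->
  (forall j, (j < n - 1)%nat -> (Cmod (a j) < 1)%R) ->
  z <> w ->
  Pn_op n beta a w <> RtoC 0 ->
  let P := fun b => Pn_op n beta b z in
  let Q := fun b => Qn_op n beta b z in
  let F := fun b => Fn_op n beta b w in
  let f := fun b => fn_op n beta b w in
  PB (n - 1) P F a
    = (- Ci / 2) * ((P a * F a + Q a) * ((z + w) / (z - w)) - P a - Q a * F a)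
  /\ PB (n - 1) Q F a = - F a * PB (n - 1) P F a
  /\ (w <> RtoC 0 -> F a + 1 <> RtoC 0 ->
      let W := (- Ci / 2) * (((P a + Q a) + z * (P a - Q a) * f a) / (z - w)) in
      PB (n - 1) P f a = (1 - w * f a) * W
      /\ PB (n - 1) Q f a = - (1 + w * f a) * W).
Proof.
  intros Hn Hb Ha Hzw HPw. cbv zeta.
  set (Pw := Pn_op n beta a w). set (Qw := Qn_op n beta a w).
  set (dF1 := fun j => - cc1 a beta (n-1) w (RtoC 1, - RtoC 1) j * / Pw + - Qw * (- cc1 a beta (n-1) w (RtoC 1, RtoC 1) j / (Pw * Pw))).
  set (dF2 := fun j => - cc2 a beta (n-1) w (RtoC 1, - RtoC 1) j * / Pw + - Qw * (- cc2 a beta (n-1) w (RtoC 1, RtoC 1) j / (Pw * Pw))).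
  assert (hF : forall j, (j < n-1)%nat -> hasW (fun b => Fn_op n beta b w) j a (dF1 j) (dF2 j)).
  { intros j _. eapply hasW_ext.
    2: apply (hasW_mul _ _ _ _ _ _ _ _ (hasW_opp _ _ _ _ _ (hasW_Q n beta a w j))
                (hasW_inv _ _ _ _ _ (hasW_P n beta a w j) HPw)).
    intros b. reflexivity. }
  assert (EPF : forall p, PB (n-1) (fun b => dot (z, - Cconj beta) (traj b z p (n-1))) (fun b => Fn_op n beta b w) a
     = (- / Pw) * sumC (n-1) (bterm a z w p (RtoC 1, - RtoC 1) (z, - Cconj beta) (w, - Cconj beta) (n-1))
       + (Qw / (Pw * Pw)) * sumC (n-1) (bterm a z w p (RtoC 1, RtoC 1) (z, - Cconj beta) (w, - Cconj beta) (n-1))).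
  { intros p. rewrite (PB_sum _ _ _ _ _ _ _ _ (fun j _ => hasW_traj a beta (n-1) z p j) hF).
    rewrite <- sumC_lin. apply sumC_ext. intros j _. unfold bterm, dF1, dF2, cc1, cc2.
    field. exact HPw. }
  assert (EP : (fun b => Pn_op n beta b z) = (fun b => dot (z, - Cconj beta) (traj b z (RtoC 1, RtoC 1) (n-1)))).
  { apply functional_extensionality; intros b; apply Pn_repr. }
  assert (EQ : (fun b => Qn_op n beta b z) = (fun b => dot (z, - Cconj beta) (traj b z (RtoC 1, - RtoC 1) (n-1)))).
  { apply functional_extensionality; intros b; apply Qn_repr. }
  assert (Hzw' : z - w <> RtoC 0).
  { intros H; apply Hzw. rewrite <- (Cplus_0_l w), <- H. ring. }
  assert (PBF : forall p, PB (n-1) (fun b => dot (z, - Cconj beta) (traj b z p (n-1))) (fun b => Fn_op n beta b w) a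
     = (- / Pw) * sumC (n-1) (bterm a z w p (RtoC 1, - RtoC 1) (z, - Cconj beta) (w, - Cconj beta) (n-1))
       + (Qw / (Pw * Pw)) * sumC (n-1) (bterm a z w p (RtoC 1, RtoC 1) (z, - Cconj beta) (w, - Cconj beta) (n-1))) by exact EPF.
  split; [|split].
  - rewrite ?EP, ?EQ, !EPF, !(Brk a z w _ _ Hzw), !dot_e1, !dot_e2.
    unfold Pw, Qw, Fn_op. rewrite <- !Pn_repr, <- !Qn_repr. unfold dd. cbn [fst snd].
    field. auto.
  - rewrite ?EP, ?EQ, !EPF, !(Brk a z w _ _ Hzw), !dot_e1, !dot_e2.
    unfold Pw, Qw, Fn_op. rewrite <- !Pn_repr, <- !Qn_repr. unfold dd. cbn [fst snd].
    field. auto.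
  - intros Hw HF1.
    set (Fa := Fn_op n beta a w).
    set (K := / w * (/ (Fa + 1) - (Fa - 1) / ((Fa + 1) * (Fa + 1)))).
    assert (hf : forall j, (j < n-1)%nat -> hasW (fun b => fn_op n beta b w) j a (K * dF1 j) (K * dF2 j)).
    { intros j Hj. eapply hasW_ext.
      2:{ eapply hasW_eq.
          apply (hasW_mul _ _ _ _ _ _ _ _ (hasW_const (/ w) j a)
                  (hasW_mul _ _ _ _ _ _ _ _ (hasW_add _ _ _ _ _ _ _ _ (hF j Hj) (hasW_const (- RtoC 1) j a))
                     (hasW_inv _ _ _ _ _ (hasW_add _ _ _ _ _ _ _ _ (hF j Hj) (hasW_const (RtoC 1) j a)) HF1))).
          - unfold K, Fa. field. auto.
          - unfold K, Fa. field. auto. }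
      intros b. reflexivity. }
    assert (EPf : forall p, PB (n-1) (fun b => dot (z, - Cconj beta) (traj b z p (n-1))) (fun b => fn_op n beta b w) a
       = K * PB (n-1) (fun b => dot (z, - Cconj beta) (traj b z p (n-1))) (fun b => Fn_op n beta b w) a).
    { intros p. rewrite (PB_sum _ _ _ _ _ _ _ _ (fun j _ => hasW_traj a beta (n-1) z p j) hf).
      rewrite (PB_sum _ _ _ _ _ _ _ _ (fun j _ => hasW_traj a beta (n-1) z p j) hF).
      rewrite <- sumC_scal. apply sumC_ext. intros j _. ring. }
    rewrite ?EP, ?EQ, !EPf, !EPF, !(Brk a z w _ _ Hzw), !dot_e1, !dot_e2.
    unfold K, Fa, Pw, Qw, fn_op, Fn_op in *. rewrite <- !Pn_repr, <- !Qn_repr. unfold dd. cbn [fst snd].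
    assert (HPQ : - Qn_op n beta a w + Pn_op n beta a w <> RtoC 0).
    { intros H. apply HF1. replace (- Qn_op n beta a w / Pn_op n beta a w + 1)
        with ((- Qn_op n beta a w + Pn_op n beta a w) / Pn_op n beta a w) by (field; exact HPw).
      rewrite H. field. exact HPw. }
    split; field; repeat split; auto.
Qed.
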